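(* Let $f:\mathbb{Z}\to[0,\infty)$ be a non-negative function of bounded variation. Then: (i) if $n$ is a local maximum of $M_Lf$, then $M_Lf(n)=f(n)$; (ii) if $n$ is a local maximum of $M_Rf$, then $M_Rf(n)=f(n)$; (iii) if $n$ is a local maximum of $\widetilde{M}f$, then $\widetilde{M}f(n)=f(n)$.
   Context: Let $\mathbb{Z}^+=\{0,1,2,\dots\}$. For $f:\mathbb{Z}\to[0,\infty)$ define the left and right maximal operators $$M_Lf(n)=\sup_{r\in\mathbb{Z}^+}\frac{1}{r+\frac12}\Big\{\tfrac12 f(n)+\sum_{k=-r}^{-1}f(n+k)\Big\},\qquad M_Rf(n)=\sup_{s\in\mathbb{Z}^+}\frac{1}{s+\frac12}\Big\{\tfrac12 f(n)+\sum_{k=1}^{s}f(n+k)\Big\},$$ and the non-centered maximal operator $\widetilde{M}f(n)=\sup_{r,s\in\mathbb{Z}^+}\frac{1}{r+s+1}\sum_{k=-r}^{s}|f(n+k)|$. A function of bounded variation means $\sum_{n\in\mathbb{Z}}|f(n+1)-f(n)|<\infty$. A point $n\in\mathbb{Z}$ is a local maximum of a function $g:\mathbb{Z}\to\mathbb{R}$ if $g(n-1)\le g(n)$ and $g(n)>g(n+1)$. *)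

(* Defs.v *)
From HB Require Import structures.
From mathcomp Require Import all_boot all_order all_algebra.
From mathcomp Require Import all_classical all_reals.
Set Implicit Arguments. Unset Strict Implicit. Unset Printing Implicit Defensive.
Import Order.TTheory GRing.Theory Num.Theory.
Local Open Scope ring_scope.
Local Open Scope classical_set_scope.

Definition ML {R : realType} (f : int -> R) (n : int) : R :=
  sup (range (fun r : nat =>
    (r%:R + 2^-1)^-1 * (2^-1 * f n + \sum_(k < r) f (n - (k.+1)%:Z)))).

Definition MR {R : realType} (f : int -> R) (n : int) : R :=
  sup (range (fun s : nat =>
    (s%:R + 2^-1)^-1 * (2^-1 * f n + \sum_(k < s) f (n + (k.+1)%:Z)))).

(* Non-centered maximal operator:
   Mt f n = sup_{r,s >= 0} (1/(r+s+1)) sum_{k=-r}^{s} |f(n+k)|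
   (the k-th summand below is the index n - r + k, k = 0..r+s). *)
Definition Mt {R : realType} (f : int -> R) (n : int) : R :=
  sup (range (fun rs : nat * nat =>
    ((rs.1 + rs.2).+1%:R)^-1 *
      \sum_(k < (rs.1 + rs.2).+1) `|f (n - rs.1%:Z + k%:Z)|)).

(* Bounded variation: sum_{n in Z} |f(n+1) - f(n)| < oo, i.e. the symmetric
   partial sums over [-N, N) of this nonnegative series are bounded. *)
Definition bounded_variation {R : realType} (f : int -> R) : Prop :=
  exists C : R, forall N : nat,
    \sum_(i < (N + N)%N) `|f (i%:Z - N%:Z + 1) - f (i%:Z - N%:Z)| <= C.

Definition local_max {R : realType} (g : int -> R) (n : int) : Prop :=
  g (n - 1) <= g n /\ g (n + 1) < g n.

(* Main.v *)
Require Import Defs.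
From HB Require Import structures.
From mathcomp Require Import all_boot all_order all_algebra.
From mathcomp Require Import all_classical all_reals.
From mathcomp Require Import zify ring lra.
Import Order.TTheory GRing.Theory Num.Theory.
Local Open Scope ring_scope.

Section S.
Variable R : realType.
Implicit Types f : int -> R.

Lemma tele f (a : int) (k : nat) :
  \sum_(i < k) (f (a + i%:Z + 1) - f (a + i%:Z)) = f (a + k%:Z) - f a.
Proof.
elim: k => [|k IH]; first by rewrite big_ord0 addr0 subrr.
rewrite big_ord_recr /= IH.
have -> : a + k.+1%:Z = a + k%:Z + 1 by lia.
by rewrite addrC addrA subrK addrC.
Qed.

Lemma bv_bound f : (forall n, 0 <= f n) -> bounded_variation f ->
  exists B, forall m, f m <= B.
Proof.
move=> f0 [C HC]; exists (f 0 + C) => m.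
have key : forall k : nat, `|f k%:Z - f 0| <= C /\ `|f 0 - f (- k%:Z)| <= C.
  move=> k; have := HC k; rewrite big_split_ord /=.
  set S1 := \sum_(i < k) _; set S2 := \sum_(i < k) _ => H.
  have S1ge : 0 <= S1 by apply: sumr_ge0 => i _.
  have S2ge : 0 <= S2 by apply: sumr_ge0 => i _.
  split.
  - suff HH: `|f k%:Z - f 0| <= S2 by lra.
    rewrite /S2; have := tele f 0 k; rewrite add0r => <-.
    apply: le_trans (ler_norm_sum _ _ _) _; rewrite le_eqVlt; apply/orP; left.
    apply/eqP; apply: eq_bigr => i _ /=.
    have -> : (k + i)%:Z - k%:Z = i%:Z by lia.
    by rewrite add0r.
  - suff HH: `|f 0 - f (- k%:Z)| <= S1 by lra.
    rewrite /S1; have := tele f (- k%:Z) k.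
    have -> : - k%:Z + k%:Z = 0 by lia.
    move=> <-.
    apply: le_trans (ler_norm_sum _ _ _) _; rewrite le_eqVlt; apply/orP; left.
    apply/eqP; apply: eq_bigr => i _ /=.
    have -> : i%:Z - k%:Z = - k%:Z + i%:Z by lia.
    by [].
case: m => [k|k].
- have [H _] := key k. have := ler_norm (f k%:Z - f 0) => ?. lra.
- have [_ H] := key k.+1. rewrite NegzE. have h := ler_norm (- (f 0 - f (- k.+1%:Z))); rewrite normrN in h.
  have := f0 0 => ?. have := f0 (- k.+1%:Z) => ?. lra.
Qed.
Lemma sup_ub (I : Type) (F : I -> R) B : (forall i, F i <= B) ->
  forall i, F i <= sup (range F).
Proof.
move=> HB i; apply: ub_le_sup; last by exists i.
by exists B => _ [j _ <-].
Qed.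

Lemma sup_leK (I : Type) (F : I -> R) K (i0 : I) : (forall i, F i <= K) ->
  sup (range F) <= K.
Proof.
move=> HK; apply: ge_sup; first by exists (F i0), i0.
by move=> _ [j _ <-].
Qed.

Lemma alg (t T M Mp g : R) : 0 < t -> 0 < g -> 0 <= Mp -> Mp < M ->
  T <= t * M - g -> T <= (t + 1) * Mp -> T <= t * (M - g * (M - Mp) / (g + Mp)).
Proof.
move=> t0 g0 Mp0 MpM H1 H2.
have gp : 0 < g + Mp by lra.
have -> : t * (M - g * (M - Mp) / (g + Mp)) =
   (t * M * (g + Mp) - t * g * (M - Mp)) / (g + Mp).
  by field; lra.
rewrite ler_pdivlMr //.
have [h|h] := lerP (t * (M - Mp)) (g + Mp).
- have : g * (t * (M - Mp)) <= g * (g + Mp) by rewrite ler_pM2l.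
  have : T * (g + Mp) <= (t * M - g) * (g + Mp) by rewrite ler_pM2r.
  nra.
- have : Mp * (g + Mp) <= Mp * (t * (M - Mp)).
    by apply: ler_wpM2l => //; apply: ltW.
  have : T * (g + Mp) <= ((t + 1) * Mp) * (g + Mp) by rewrite ler_pM2r.
  nra.
Qed.

Lemma eps_facts (M Mp g : R) : 0 < g -> 0 <= Mp -> Mp < M ->
  0 < g * (M - Mp) / (g + Mp) /\ g * (M - Mp) / (g + Mp) <= M - Mp.
Proof.
move=> g0 Mp0 MpM; have gp : 0 < g + Mp by lra.
split; first by apply: divr_gt0 => //; apply: mulr_gt0 => //; lra.
rewrite ler_pdivrMr //.
have : g * (M - Mp) <= (g + Mp) * (M - Mp) by apply: ler_wpM2r; lra.
lra.
Qed.

Variable f : int -> R.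
Hypothesis f0 : forall n, 0 <= f n.
Variable B : R.
Hypothesis fB : forall n, f n <= B.

Lemma sum_le_B (r : nat) (F : 'I_r -> int) : \sum_(k < r) f (F k) <= r%:R * B.
Proof.
apply: le_trans (ler_sum _ (fun k _ => fB (F k))) _.
by rewrite sumr_const card_ord mulr_natl.
Qed.

Lemma B0 : 0 <= B. Proof. exact: le_trans (f0 0) (fB 0). Qed.

Definition TL m (r : nat) := 2^-1 * f m + \sum_(k < r) f (m - (k.+1)%:Z).

Lemma tpos (r : nat) : 0 < r%:R + 2^-1 :> R.
Proof. have : 0 <= r%:R :> R by []. lra. Qed.

Lemma ML_ub m r : TL m r <= (r%:R + 2^-1) * ML f m.
Proof.
rewrite -ler_pdivrMl ?tpos //.
apply: (@sup_ub _ (fun r : nat => (r%:R + 2^-1)^-1 * TL m r) B) => i.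
rewrite ler_pdivrMl ?tpos // /TL.
have := @sum_le_B i (fun k : 'I_i => m - (k.+1)%:Z). have := fB m. have := B0. move=> ? ? ?. nra.
Qed.

Lemma ML_ge m : f m <= ML f m.
Proof. have := ML_ub m 0; rewrite /TL big_ord0 => h. lra. Qed.

Lemma TLp m r : TL (m + 1) r.+1 = 2^-1 * f (m + 1) + 2^-1 * f m + TL m r.
Proof.
rewrite /TL big_ord_recl.
have -> : m + 1 - (0.+1)%:Z = m by lia.
under eq_bigr => i _ do have -> : m + 1 - ((bump 0 i).+1)%:Z = m - (i.+1)%:Z by rewrite /bump /=; lia.
lra.
Qed.

Lemma TLm m r : TL m r.+1 = 2^-1 * f m + 2^-1 * f (m - 1) + TL (m - 1) r.
Proof.
rewrite /TL big_ord_recl.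
have -> : m - (0.+1)%:Z = m - 1 by lia.
under eq_bigr => i _ do have -> : m - ((bump 0 i).+1)%:Z = m - 1 - (i.+1)%:Z by rewrite /bump /=; lia.
lra.
Qed.

Lemma partL n : local_max (ML f) n -> ML f n = f n.
Proof.
move=> [Hm Hp].
have := ML_ge n; rewrite le_eqVlt => /orP [/eqP -> //|lt]; exfalso.
set M := ML f n in Hm Hp lt.
set Mp := ML f (n + 1) in Hp.
set Mm := ML f (n - 1) in Hm.
set g := (M - f n) / 2.
have g0 : 0 < g by rewrite /g; lra.
have Mp0 : 0 <= Mp by apply: le_trans (f0 _) (ML_ge _).
have [e0 eM] := @eps_facts M Mp g g0 Mp0 Hp.
set eps := g * (M - Mp) / (g + Mp) in e0 eM.
have H1 : forall r : nat, TL n r <= (r%:R + 2^-1) * M - g.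
  case=> [|r].
    rewrite /TL big_ord0 /g; lra.
  rewrite TLm -(natr1 (R:=R) r).
  have h1 := ML_ub (n - 1) r; have h2 := ML_ge (n - 1). rewrite -/Mm in h1 h2.
  have h3 : (r%:R + 2^-1) * Mm <= (r%:R + 2^-1) * M by apply: ler_wpM2l => //; apply: ltW; apply: tpos.
  rewrite /g; lra.
have H2 : forall r : nat, TL n r <= (r%:R + 2^-1 + 1) * Mp.
  move=> r; have h1 := ML_ub (n + 1) r.+1; rewrite TLp -(natr1 (R:=R) r) -/Mp in h1.
  have := f0 n; have := f0 (n + 1) => ? ?. lra.
have : M <= M - eps.
  apply: (@sup_leK _ (fun r : nat => (r%:R + 2^-1)^-1 * TL n r) _ 0%N) => r.
  rewrite ler_pdivrMl ?tpos //.
  exact: (@alg _ _ _ _ _ (tpos r) g0 Mp0 Hp (H1 r) (H2 r)).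
lra.
Qed.

Definition TR m (r : nat) := 2^-1 * f m + \sum_(k < r) f (m + (k.+1)%:Z).

Lemma MR_ub m r : TR m r <= (r%:R + 2^-1) * MR f m.
Proof.
rewrite -ler_pdivrMl ?tpos //.
apply: (@sup_ub _ (fun r : nat => (r%:R + 2^-1)^-1 * TR m r) B) => i.
rewrite ler_pdivrMl ?tpos // /TR.
have := @sum_le_B i (fun k : 'I_i => m + (k.+1)%:Z). have := fB m. have := B0. move=> ? ? ?. nra.
Qed.

Lemma MR_ge m : f m <= MR f m.
Proof. have := MR_ub m 0; rewrite /TR big_ord0 => h. lra. Qed.

Lemma TRp m r : TR m r.+1 = 2^-1 * f m + 2^-1 * f (m + 1) + TR (m + 1) r.
Proof.
rewrite /TR big_ord_recl.
have -> : m + (0.+1)%:Z = m + 1 by lia.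
under eq_bigr => i _ do have -> : m + ((bump 0 i).+1)%:Z = m + 1 + (i.+1)%:Z by rewrite /bump /=; lia.
lra.
Qed.

Lemma partR n : local_max (MR f) n -> MR f n = f n.
Proof.
move=> [Hm Hp].
have := MR_ge n; rewrite le_eqVlt => /orP [/eqP -> //|lt]; exfalso.
set M := MR f n in Hm Hp lt.
set Mp := MR f (n + 1) in Hp.
suff K : forall K, f n <= K -> Mp <= K -> K < M -> False.
  have [h|h] := leP (f n) Mp.
    by apply: (K Mp).
  by apply: (K (f n)) => //; apply: ltW.
move=> K h1 h2 h3.
have : M <= K.
  apply: (@sup_leK _ (fun r : nat => (r%:R + 2^-1)^-1 * TR n r) _ 0%N) => r.
  rewrite ler_pdivrMl ?tpos //.
  case: r => [|r].
    rewrite /TR big_ord0; lra.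
  rewrite TRp -(natr1 (R:=R) r).
  have g1 := MR_ub (n + 1) r; have g2 := MR_ge (n + 1). rewrite -/Mp in g1 g2.
  have g3 : (r%:R + 2^-1) * Mp <= (r%:R + 2^-1) * K by apply: ler_wpM2l => //; apply: ltW; apply: tpos.
  lra.
lra.
Qed.

Definition W m (r s : nat) := \sum_(k < (r + s).+1) `|f (m - r%:Z + k%:Z)|.

Lemma npos (k : nat) : 0 < k.+1%:R :> R.
Proof. by rewrite ltr0n. Qed.

Lemma Mt_ub m r s : W m r s <= (r + s).+1%:R * Mt f m.
Proof.
rewrite -ler_pdivrMl ?npos //.
suff H : forall rs : nat * nat, ((rs.1 + rs.2).+1%:R)^-1 * W m rs.1 rs.2 <= B.
  exact: (@sup_ub _ (fun rs : nat * nat => ((rs.1 + rs.2).+1%:R)^-1 * W m rs.1 rs.2) B H (r, s)).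
move=> -[i j] /=.
rewrite ler_pdivrMl ?npos // /W.
under eq_bigr => k _ do rewrite ger0_norm ?f0 //.
exact: sum_le_B.
Qed.

Lemma Wn m : W m 0 0 = f m.
Proof. by rewrite /W big_ord1 /= ger0_norm ?f0 //; congr f; lia. Qed.

Lemma Mt_ge m : f m <= Mt f m.
Proof. have := Mt_ub m 0 0; rewrite Wn /= mulr1n mul1r //. Qed.

Lemma Wshift m r s : W m r s.+1 = W (m + 1) r.+1 s.
Proof.
rewrite /W addnS addSn; apply: eq_bigr => k _; congr (`|f _|); lia.
Qed.

Lemma Wrecm m r : W m r.+1 0 = W (m - 1) r 0 + f m.
Proof.
rewrite /W !addn0 big_ord_recr /= ger0_norm ?f0 //.
have -> : m - r.+1%:Z + r.+1%:Z = m by lia.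
congr (_ + _); apply: eq_bigr => k _; congr (`|f _|); lia.
Qed.

Lemma Wrecp m r : W (m + 1) r.+1 0 = W m r 0 + f (m + 1).
Proof.
rewrite /W !addn0 big_ord_recr /= ger0_norm ?f0 //.
have -> : m + 1 - r.+1%:Z + r.+1%:Z = m + 1 by lia.
congr (_ + _); apply: eq_bigr => k _; congr (`|f _|); lia.
Qed.

Lemma partT n : local_max (Mt f) n -> Mt f n = f n.
Proof.
move=> [Hm Hp].
have := Mt_ge n; rewrite le_eqVlt => /orP [/eqP -> //|lt]; exfalso.
set M := Mt f n in Hm Hp lt.
set Mp := Mt f (n + 1) in Hp.
set Mm := Mt f (n - 1) in Hm.
set g := (M - f n) / 2.
have g0 : 0 < g by rewrite /g; lra.
have Mp0 : 0 <= Mp by apply: le_trans (f0 _) (Mt_ge _).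
have [e0 eM] := @eps_facts M Mp g g0 Mp0 Hp.
set eps := g * (M - Mp) / (g + Mp) in e0 eM.
have : M <= M - eps.
  apply: (@sup_leK _ (fun rs : nat * nat => ((rs.1 + rs.2).+1%:R)^-1 * W n rs.1 rs.2) _ (0%N, 0%N)) => -[r s] /=.
  rewrite ler_pdivrMl ?npos //.
  case: s => [|s].
  - rewrite addn0.
    have H1 : W n r 0 <= r.+1%:R * M - g.
      case: r => [|r].
        rewrite Wn /g; lra.
      rewrite Wrecm -(natr1 (R:=R) r.+1).
      have h1 := Mt_ub (n - 1) r 0; have h2 := Mt_ge (n - 1). rewrite -/Mm addn0 in h1 h2.
      have h3 : r.+1%:R * Mm <= r.+1%:R * M by apply: ler_wpM2l => //; apply: ltW; apply: npos.
      rewrite /g; lra.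
    have H2 : W n r 0 <= (r.+1%:R + 1) * Mp.
      have h1 := Mt_ub (n + 1) r.+1 0; rewrite Wrecp addn0 -/Mp in h1.
      have := f0 (n + 1) => ?. rewrite (natr1 (R:=R) r.+1). lra.
    exact: (@alg _ _ _ _ _ (npos r) g0 Mp0 Hp H1 H2).
  - rewrite Wshift.
    have h1 := Mt_ub (n + 1) r.+1 s; rewrite -/Mp addSn -addnS in h1.
    apply: le_trans h1 _.
    apply: ler_wpM2l; first by apply: ltW; apply: npos.
    lra.
lra.
Qed.
End S.

Theorem lemma1 (R : realType) (f : int -> R)
  (f_ge0 : forall n, 0 <= f n) (f_bv : bounded_variation f) :
  (forall n : int, local_max (ML f) n -> ML f n = f n) /\
  (forall n : int, local_max (MR f) n -> MR f n = f n) /\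
  (forall n : int, local_max (Mt f) n -> Mt f n = f n).
Proof.
have [B fB] := @bv_bound R f f_ge0 f_bv.
split; [|split].
- exact: (@partL R f f_ge0 B fB).
- exact: (@partR R f f_ge0 B fB).
- exact: (@partT R f f_ge0 B fB).
Qed.
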